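(* If $L:\mathbb{R}^d\setminus\{0\}\to\mathbb{R}$ is $C^2$ and scale invariant, then for every $x\neq0$, $$\|\nabla L(x)\|_2\le\frac{\pi}{\|x\|_2}\sup_{\|y\|_2=1}\|\nabla^2L(y)\|_2 .$$
   Context: Scale invariant means $L(cx)=L(x)$ for all $c>0$, $x\neq0$. $\|\cdot\|_2$ on matrices is the spectral norm. *)

(* Defs.v *)
From HB Require Import structures.
From mathcomp Require Import all_boot all_order all_algebra.
From mathcomp Require Import all_classical all_reals all_analysis.
Set Implicit Arguments. Unset Strict Implicit. Unset Printing Implicit Defensive.
Import Order.TTheory GRing.Theory Num.Theory.
Import numFieldNormedType.Exports.
Local Open Scope classical_set_scope.
Local Open Scope ring_scope.

Section Defs.
Variable R : realType.

(* Euclidean (2-)norm of a matrix viewed as a vector of entries;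
   on row/column vectors this is the usual Euclidean norm. *)
Definition norm2 (m n : nat) (A : 'M[R]_(m, n)) : R :=
  Num.sqrt (\sum_(i < m) \sum_(j < n) A i j ^+ 2).

Definition specnorm (d : nat) (A : 'M[R]_d) : R :=
  sup [set norm2 (A *m v) | v in [set v : 'cV[R]_d | norm2 v = 1]].

Definition basis_vec (d : nat) (i : 'I_d) : 'rV[R]_d := delta_mx 0 i.

Definition partial (d : nat) (f : 'rV[R]_d -> R) (i : 'I_d) : 'rV[R]_d -> R :=
  fun x => 'D_(basis_vec i) f x.

Definition gradient (d : nat) (f : 'rV[R]_d -> R) (x : 'rV[R]_d) : 'cV[R]_d :=
  \col_i partial f i x.

Definition hessian (d : nat) (f : 'rV[R]_d -> R) (x : 'rV[R]_d) : 'M[R]_d :=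
  \matrix_(i, j) partial (partial f j) i x.

Definition C2_away0 (d : nat) (f : 'rV[R]_d -> R) : Prop :=
  (forall y, y != 0 -> {for y, continuous f}) /\
  forall i : 'I_d,
    (forall y, y != 0 -> derivable f y (basis_vec i)) /\
    (forall y, y != 0 -> {for y, continuous (partial f i)}) /\
    forall j : 'I_d,
      (forall y, y != 0 -> derivable (partial f i) y (basis_vec j)) /\
      (forall y, y != 0 -> {for y, continuous (partial (partial f i) j)}).

Definition scale_invariant (d : nat) (f : 'rV[R]_d -> R) : Prop :=
  forall (c : R) (x : 'rV[R]_d), 0 < c -> x != 0 -> f (c *: x) = f x.

End Defs.

(* Main.v *)
Require Import Defs.
From HB Require Import structures.
From mathcomp Require Import all_boot all_order all_algebra.
From mathcomp Require Import all_classical all_reals all_analysis.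
From mathcomp Require Import lra ring.
Import Order.TTheory GRing.Theory Num.Theory.
Import numFieldNormedType.Exports.
Local Open Scope classical_set_scope.
Local Open Scope ring_scope.

Set Implicit Arguments. Unset Strict Implicit.
Section S.
Variable R : realType.

Lemma mvt_bound (g dg : R -> R) (c p eta : R) :
  (forall s : R, `|s| <= `|c| -> is_derive s (1:R) g (dg s)) ->
  (forall s : R, `|s| <= `|c| -> `|dg s - p| <= eta) ->
  `|g c - g 0 - c * p| <= `|c| * eta.
Proof.
move=> hd hb.
have cont : forall a b, a <= b -> (forall s, a <= s <= b -> `|s| <= `|c|) ->
   {within `[a, b], continuous g}.
  move=> a b _ hab; apply: continuous_in_subspaceT => s.
  rewrite inE /= in_itv /= => /hab /hd [dv _].
  by apply: differentiable_continuous; apply/derivable1_diffP.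
have key : forall a b, a <= b -> (forall s, a <= s <= b -> `|s| <= `|c|) ->
   exists2 xi, `|xi| <= `|c| & g b - g a = dg xi * (b - a).
  move=> a b ab hab.
  have hd' : forall s, s \in `]a, b[ -> is_derive s (1:R) g (dg s).
    move=> s hs; apply: hd; apply: hab; rewrite in_itv /= in hs.
    by case/andP: hs => /ltW -> /ltW ->.
  have [xi xin E] := MVT_segment ab hd' (cont _ _ ab hab).
  by exists xi => //; apply: hab; rewrite !(itvP xin).
have [c0|c0] := leP 0 c.
  have [xi xic E] : exists2 xi, `|xi| <= `|c| & g c - g 0 = dg xi * (c - 0).
    apply: key => // s /andP[s0 sc]; rewrite !ger0_norm //; exact: le_trans sc.
  rewrite E subr0 [c * p]mulrC -mulrBl normrM mulrC ler_wpM2l //; exact: hb.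
have [xi xic E] : exists2 xi, `|xi| <= `|c| & g 0 - g c = dg xi * (0 - c).
  apply: key; first exact: ltW.
  move=> s /andP[s0 sc]; rewrite !ler0_norm ?lerN2 //; try exact: ltW; exact: le_trans (ltW c0).
have -> : g c - g 0 - c * p = - (g 0 - g c) - c * p by rewrite opprB.
rewrite E sub0r mulrN opprK [c * p]mulrC -mulrBl normrM mulrC ler_wpM2l //; exact: hb.
Qed.

Lemma entry_le_norm (d : nat) (w : 'rV[R]_d) i : `|w ord0 i| <= `|w|.
Proof.
change (`|w ord0 i| <= mx_norm w); rewrite mx_normrE; apply/bigmax_geP; right => /=.
by exists (ord0, i).
Qed.

Lemma norm_le_entries (d : nat) (w : 'rV[R]_d) c : 0 <= c ->
  (forall i, `|w ord0 i| <= c) -> `|w| <= c.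
Proof.
move=> c0 h; change (mx_norm w <= c); rewrite mx_normrE; apply/bigmax_leP; split=> //.
by move=> [i j] _ /=; rewrite (ord1 i); apply: h.
Qed.
Lemma line_derive (V : normedModType R) (f : V -> R) (z e : V) (t : R) :
  derivable f (z + t *: e) e ->
  is_derive t 1 (fun s => f (z + s *: e)) ('D_e f (z + t *: e)).
Proof.
move=> df.
have E : (fun h : R => h^-1 *: (((fun s => f (z + s *: e)) \o shift t) (h *: 1) - f (z + t *: e)))
   = (fun h => h^-1 *: ((f \o shift (z + t *: e)) (h *: e) - f (z + t *: e))).
  apply/funext => h /=; congr (_ *: (f _ - _)).
  by rewrite scaler1 scalerDl addrCA addrA.
split; rewrite /derivable /derive /=.
  by rewrite E.
by rewrite E.
Qed.
Lemma diff_from_o (V W : normedModType R) (f : V -> W) (df : {linear V -> W}) x :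
  continuous df -> f \o shift x = cst (f x) + df +o_ 0 id -> differentiable f x.
Proof.
move=> dfc dxf.
have hdf h : (f \o shift x = cst (f x) + h +o_ 0 id) ->
    h = f \o shift x - cst (f x) +o_ 0 id.
  move=> hdf; apply: eqaddoE.
  rewrite hdf addrAC -!addrA addrC !addrA subrK.
  rewrite -[LHS]addr0 -addrA; congr (_ + _).
  by apply/eqP; rewrite eq_sym addrC addr_eq0 oppo.
apply/diffP => /=.
apply: (@getPex _ (fun (df : {linear V -> W}) => continuous df /\
  forall y, f y = f (lim (nbhs x)) + df (y - lim (nbhs x))
                  +o_(y \near x) (y - lim (nbhs x)))).
exists df; split=> //; apply: eqaddoEx => z.
rewrite (hdf _ dxf) !addrA lim_id // /(_ \o _) /= subrK [f _ + _]addrC addrK.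
rewrite -addrA -[LHS]addr0; congr (_ + _).
apply/eqP; rewrite eq_sym addrC addr_eq0 oppox; apply/eqP.
rewrite [in LHS]littleo_center0 (comp_centerK x id).
by rewrite -[- _ in RHS](comp_centerK x).
Qed.

Lemma ball_pt (d : nat) (a w h : 'rV[R]_d) (del : R) : `|h| < del ->
  (forall j, `|w ord0 j| <= `|h|) -> ball a del (a + w).
Proof.
move=> hd hw; rewrite -ball_normE /= opprD addrA subrr sub0r normrN.
apply: le_lt_trans hd; apply: norm_le_entries => //.
Qed.

Definition zk (d : nat) (h : 'rV[R]_d) (k : nat) : 'rV[R]_d :=
  \row_j (if (j < k)%N then h ord0 j else 0).
Arguments zk {d}.

Lemma zkS (d : nat) (h : 'rV[R]_d) (k : 'I_d) :
  zk h k.+1 = zk h k + h ord0 k *: basis_vec R k.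
Proof.
apply/rowP => j; rewrite !mxE /=.
have [->|jk] := eqVneq j k; first by rewrite ltnS leqnn ltnn mulr1 add0r.
rewrite mulr0 addr0 ltnS leq_eqVlt.
have -> : (nat_of_ord j == nat_of_ord k) = false by apply/negbTE; rewrite val_eqE.
by [].
Qed.

Lemma zk_entries (d : nat) (h : 'rV[R]_d) (k : 'I_d) s : `|s| <= `|h ord0 k| ->
  forall j, `|(zk h k + s *: basis_vec R k) ord0 j| <= `|h|.
Proof.
move=> hs j; rewrite !mxE /=.
have [->|jk] := eqVneq j k.
  by rewrite ltnn mulr1 add0r; apply: le_trans hs (entry_le_norm _ _).
rewrite mulr0 addr0; case: ifP => _; first exact: entry_le_norm.
by rewrite normr0 normr_ge0.
Qed.

Lemma C1_diff (d : nat) (f : 'rV[R]_d -> R) (a : 'rV[R]_d) :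
  (\forall y \near a, forall i, derivable f y (basis_vec R i)) ->
  (forall i, {for a, continuous (partial f i)}) ->
  differentiable f a /\
  (forall v, 'd f a v = \sum_i v ord0 i * partial f i a).
Proof.
move=> hder hcont.
pose p i := partial f i a.
pose lf := fun v : 'rV[R]_d => \sum_i v ord0 i * p i.
have lin : linear lf.
  move=> k u v; rewrite /lf scaler_sumr -big_split; apply: eq_bigr => i _.
  by rewrite !mxE mulrDl -mulrA.
pose lfM := GRing.isLinear.Build _ _ _ _ lf lin.
pose LF : {linear _ -> R} := HB.pack lf lfM.
have LFE : (LF : _ -> _) = lf by [].
have LFc : continuous LF.
  rewrite LFE /lf.
  apply: (continuous_big (op := +%R) (x0 := 0)); first exact: add_continuous.
  move=> i _ x.
  have H1 : {for x, continuous (fun v : 'rV[R]_d => v ord0 i)}.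
    exact: coord_continuous.
  have H2 : {for x, continuous (fun=> p i : R)} by exact: cst_continuous.
  exact: (continuousM H1 H2).
have ho : f \o shift a = cst (f a) + (LF : _ -> R) +o_ (0 : 'rV[R]_d) id.
  apply/eqaddoP => eps eps0.
  pose eta := eps / (d%:R + 1).
  have eta0 : 0 < eta by rewrite divr_gt0 // ltr_wpDl.
  have hc : \forall y \near a, forall i, `|p i - partial f i y| <= eta.
    apply: (@filter_forall _ _ (fun i y => `|p i - partial f i y| <= eta) (nbhs a) _) => i.
    by move/cvgrPdist_le : (hcont i) => /(_ eta eta0).
  have hP : \forall y \near a, (forall i, derivable f y (basis_vec R i)) /\
        (forall i, `|p i - partial f i y| <= eta).
    by apply/(@near_andP _ (nbhs a) _ _ _); split.
  have [del del0 hdel] := (nbhs_ballP _ _).1 hP.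
  near=> h.
  have hb : `|h| < del.
    have : ball (0 : 'rV[R]_d) del h by near: h; exact: nbhsx_ballx.
    by rewrite -ball_normE /= sub0r normrN.
  rewrite !fctE /lf /cst /=.
  have zk0 : zk h 0 = 0 by apply/rowP => j; rewrite !mxE.
  have zkd : zk h d = h by apply/rowP => j; rewrite !mxE ltn_ord.
  have tel : f (h + a) - f a = \sum_(k < d) (f (a + zk h k.+1) - f (a + zk h k)).
    rewrite -(big_mkord xpredT (fun k => f (a + zk h k.+1) - f (a + zk h k))).
    by rewrite telescope_sumr // zk0 zkd addr0 [a + h]addrC.
  have -> : f (h + a) - (f a + lf h) =
      \sum_(k < d) (f (a + zk h k.+1) - f (a + zk h k) - h ord0 k * p k).
    by rewrite sumrB -tel opprD addrA /lf.
  apply: le_trans (ler_norm_sum _ _ _) _.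
  apply: (@le_trans _ _ (\sum_(k < d) (`|h| * eta))).


    apply: ler_sum => k _.
    pose z := a + zk h k.
    have hin : forall s, `|s| <= `|h ord0 k| -> ball a del (z + s *: basis_vec R k).
      by move=> s hs; rewrite -addrA; apply: ball_pt hb (zk_entries hs).
    have := @mvt_bound (fun s => f (z + s *: basis_vec R k))
       (fun s => partial f k (z + s *: basis_vec R k)) (h ord0 k) (p k) eta.
    rewrite scale0r addr0 /z zkS addrA => H.
    apply: le_trans (H _ _) _.
    - move=> s hs; apply: line_derive; exact: (hdel _ (hin s hs)).1.
    - by move=> s hs; rewrite distrC; exact: (hdel _ (hin s hs)).2.
    by rewrite ler_wpM2r ?entry_le_norm // ltW.
  rewrite sumr_const card_ord -mulr_natl [eps * _]mulrC mulrCA ler_wpM2l //.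
  rewrite /eta mulrCA -[leRHS]mulr1 ler_wpM2l ?ltW //.
  by rewrite ltr_pdivrMr ?ltr_wpDl // mul1r ltrDl.

have df : differentiable f a by exact: diff_from_o LFc ho.
split => // v; have := diff_unique LFc ho; rewrite LFE => ->; by [].
Unshelve. all: by end_near.
Qed.
End S.

Unset Implicit Arguments.

Set Implicit Arguments. Unset Strict Implicit.
Section S2.
Variable R : realType.

Lemma is_deriveZl_cst (V : normedModType R) (k : R -> R) (w : V) (t dk : R) :
  is_derive t (1:R) k dk -> is_derive t (1:R) (fun s => k s *: w) (dk *: w).
Proof.
move=> [dv dval].
have E : (fun h : R => h^-1 *: (((fun s => k s *: w) \o shift t) (h *: 1) - k t *: w))
   = (fun h => (h^-1 *: ((k \o shift t) (h *: 1) - k t)) *: w).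
  by apply/funext => h /=; rewrite -scalerBl scalerA.
have cv : (fun h : R => h^-1 *: ((k \o shift t) (h *: 1) - k t)) @ 0^' --> dk.
  by rewrite -dval; exact: dv.
have cv2 : (fun h : R => (h^-1 *: ((k \o shift t) (h *: 1) - k t)) *: w) @ 0^' --> dk *: w.
  exact: cvgZr_tmp.
split; rewrite /derivable /derive E.
  by apply/cvg_ex; exists (dk *: w).
exact: cvg_lim.
Qed.

Lemma curve_deriv (d : nat) (y u : 'rV[R]_d) (t : R) :
  is_derive t (1:R) (fun s => cos s *: y + sin s *: u) (- sin t *: y + cos t *: u).
Proof.
apply: (@is_derive_eq _ _ _ _ _ _ _ ((- sin t) *: y + cos t *: u)) => //.
have h1 := is_deriveZl_cst y (is_derive_cos t).
have h2 := is_deriveZl_cst u (is_derive_sin t).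
have := is_deriveD h1 h2.
by [].
Qed.

Lemma curve_chain (d : nat) (F : 'rV[R]_d -> R) (c : R -> 'rV[R]_d) (dc : 'rV[R]_d)
   (t : R) (G : 'I_d -> R) :
  is_derive t (1:R) c dc -> differentiable F (c t) ->
  (forall v, 'd F (c t) v = \sum_i v ord0 i * G i) ->
  is_derive t (1:R) (F \o c) (\sum_i dc ord0 i * G i).
Proof.
move=> [cd cval] dF dFE.
have dc' : differentiable c t by apply/derivable1_diffP.
have dFc : differentiable (F \o c) t by apply: differentiable_comp.
have val : 'D_1 (F \o c) t = \sum_i dc ord0 i * G i.
  rewrite deriveE // diff_comp //= -dFE; congr ('d F (c t) _).
  by rewrite -deriveE // cval.
split => //; exact: diff_derivable.
Qed.
End S2.

Unset Implicit Arguments.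

Set Implicit Arguments. Unset Strict Implicit.
Section S3.
Variable R : realType.
Variables (d : nat) (L : 'rV[R]_d -> R).
Hypothesis hC2 : C2_away0 L.
Hypothesis hsi : scale_invariant L.

Lemma near_neq0 (a : 'rV[R]_d) : a != 0 -> \forall y \near a, y != 0.
Proof.
move=> a0; have : ball a `|a| =1 (fun y => `|a - y| < `|a|).
  by move=> y; rewrite -ball_normE.
move=> hb; have : 0 < `|a| by rewrite normr_gt0.
move=> ha; have := @nbhsx_ballx _ _ a _ ha; apply: filterS => y.
rewrite hb; apply: contraTN => /eqP ->; by rewrite subr0 ltxx.
Qed.

Lemma diffL (y : 'rV[R]_d) : y != 0 ->
  differentiable L y /\ forall v, 'd L y v = \sum_i v ord0 i * partial L i y.
Proof.
move=> y0; apply: C1_diff.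
  by apply: filterS (near_neq0 y0) => z z0 i; exact: (hC2.2 i).1 z z0.
by move=> i; exact: (hC2.2 i).2.1 y y0.
Qed.

Lemma diffPart (i : 'I_d) (y : 'rV[R]_d) : y != 0 ->
  differentiable (partial L i) y /\
  forall v, 'd (partial L i) y v = \sum_j v ord0 j * partial (partial L i) j y.
Proof.
move=> y0; apply: C1_diff.
  by apply: filterS (near_neq0 y0) => z z0 j; exact: ((hC2.2 i).2.2 j).1 z z0.
by move=> j; exact: ((hC2.2 i).2.2 j).2 y y0.
Qed.

Lemma euler (z : 'rV[R]_d) : z != 0 -> \sum_i z ord0 i * partial L i z = 0.
Proof.
move=> z0; have [dL dLE] := diffL z0.
rewrite -dLE -deriveE //.
have h := @line_derive R _ L 0 z 1 (eq_ind_r (fun w => derivable L w z) (diff_derivable (v:=z) dL) (etrans (add0r _) (scale1r _))).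
rewrite add0r scale1r in h.
have E : \forall s \near (1:R), (fun s => L (0 + s *: z)) s = cst (L z) s.
  have := @nbhsx_ballx _ _ (1:R) 1 ltr01; apply: filterS => s.
  rewrite -ball_normE /= ltr_norml => /andP[_ hs].
  by rewrite add0r hsi //; lra.
have := near_eq_is_derive E h; case => _ <-.
exact: derive_cst.
Qed.

Lemma partial_scale (i : 'I_d) (y : 'rV[R]_d) (c : R) : 0 < c -> y != 0 ->
  partial L i (c *: y) = c^-1 * partial L i y.
Proof.
move=> c0 y0.
have LE : L = L \o ( *:%R c^-1).
  apply/funext => w /=; have [->|w0] := eqVneq w 0; first by rewrite scaler0.
  by rewrite hsi // invr_gt0.
have [dL _] := diffL y0.
have y' : c^-1 *: (c *: y) = y by rewrite scalerA mulVf ?gt_eqF // scale1r.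
have ds : differentiable ( *:%R c^-1) (c *: y) by exact: ex_diff.
rewrite /partial {1}LE deriveE; last first.
  by apply: differentiable_comp => //=; rewrite y'.
rewrite diff_comp //=; last by rewrite y'.
rewrite (@diff_val _ _ _ _ _ _ _ (is_diff_scaler c^-1 (c *: y))) y' linearZ /=.
by rewrite -deriveE.
Qed.
End S3.

Unset Implicit Arguments.

Set Implicit Arguments. Unset Strict Implicit.
Section S4.
Variable R : realType.

Lemma CS (n : nat) (a b : 'I_n -> R) :
  (\sum_i a i * b i) ^+ 2 <= (\sum_i a i ^+ 2) * (\sum_i b i ^+ 2).
Proof.
have H : 0 <= \sum_i \sum_j (a i * b j - a j * b i) ^+ 2.
  by apply: sumr_ge0 => i _; apply: sumr_ge0 => j _; exact: sqr_ge0.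
have E : \sum_i \sum_j (a i * b j - a j * b i) ^+ 2 =
   \sum_i \sum_j (a i ^+ 2 * b j ^+ 2) + \sum_i \sum_j (a j ^+ 2 * b i ^+ 2)
   - 2 * \sum_i \sum_j ((a i * b i) * (a j * b j)).
  rewrite mulr_sumr -big_split -sumrB /=; apply: eq_bigr => i _.
  rewrite mulr_sumr -big_split -sumrB /=; apply: eq_bigr => j _.
  ring.
have E1 : (\sum_i a i ^+ 2) * (\sum_i b i ^+ 2) = \sum_i \sum_j (a i ^+ 2 * b j ^+ 2).
  by rewrite mulr_suml; apply: eq_bigr => i _; rewrite mulr_sumr.
have E2 : (\sum_i a i ^+ 2) * (\sum_i b i ^+ 2) = \sum_i \sum_j (a j ^+ 2 * b i ^+ 2).
  rewrite mulrC mulr_suml; apply: eq_bigr => i _; rewrite mulr_sumr.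
  by apply: eq_bigr => j _; rewrite mulrC.
have E3 : (\sum_i a i * b i) ^+ 2 = \sum_i \sum_j ((a i * b i) * (a j * b j)).
  by rewrite expr2 mulr_suml; apply: eq_bigr => i _; rewrite mulr_sumr.
rewrite E -E1 -E2 -E3 in H; lra.
Qed.

Lemma CS_abs (n : nat) (a b : 'I_n -> R) :
  `|\sum_i a i * b i| <= Num.sqrt (\sum_i a i ^+ 2) * Num.sqrt (\sum_i b i ^+ 2).
Proof.
rewrite -sqrtrM ?sumr_ge0 // => [|i _]; last exact: sqr_ge0.
rewrite -(sqrtr_sqr (\sum_i a i * b i)) ler_wsqrtr //; exact: CS.
Qed.


Lemma norm2_row (d : nat) (w : 'rV[R]_d) : norm2 w = Num.sqrt (\sum_j w ord0 j ^+ 2).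
Proof. by rewrite /norm2 big_ord1. Qed.

Lemma norm2_col (d : nat) (v : 'cV[R]_d) : norm2 v = Num.sqrt (\sum_i v i ord0 ^+ 2).
Proof. by rewrite /norm2; under eq_bigr do rewrite big_ord1. Qed.

Lemma sqrt_eq1 (x : R) : 0 <= x -> Num.sqrt x = 1 -> x = 1.
Proof. by move=> x0 h; rewrite -(sqr_sqrtr x0) h expr1n. Qed.

Lemma norm2_ge0 (m n : nat) (A : 'M[R]_(m, n)) : 0 <= norm2 A.
Proof. exact: sqrtr_ge0. Qed.

Lemma norm2_mul_le (d : nat) (A : 'M[R]_d) (v : 'cV[R]_d) : norm2 v = 1 ->
  norm2 (A *m v) <= norm2 A.
Proof.
rewrite norm2_col => /sqrt_eq1 hv.
have {}hv : \sum_i v i ord0 ^+ 2 = 1 by apply: hv; apply: sumr_ge0 => i _; exact: sqr_ge0.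
rewrite norm2_col /norm2 ler_wsqrtr // ler_sum // => i _.
rewrite mxE; apply: le_trans (CS (fun k => A i k) (fun k => v k ord0)) _.
by rewrite hv mulr1.
Qed.

Lemma mul_le_specnorm (d : nat) (A : 'M[R]_d) (v : 'cV[R]_d) : norm2 v = 1 ->
  norm2 (A *m v) <= specnorm A.
Proof.
move=> hv; apply: sup_upper_bound; last by exists v.
split; first by exists (norm2 (A *m v)); exists v.
by exists (norm2 A) => _ [w hw <-]; exact: norm2_mul_le.
Qed.

Lemma quad_bound (d : nat) (A : 'M[R]_d) (w : 'rV[R]_d) : norm2 w = 1 ->
  `|\sum_j w ord0 j * (A *m w^T) j ord0| <= specnorm A.
Proof.
move=> hw.
have hwT : norm2 w^T = 1.
  by rewrite norm2_col -hw norm2_row; under eq_bigr do rewrite mxE.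
apply: le_trans (CS_abs _ _) _.
rewrite -norm2_row hw mul1r -norm2_col; exact: mul_le_specnorm.
Qed.

End S4.

Unset Implicit Arguments.

Set Implicit Arguments. Unset Strict Implicit.
Section S5.
Variable R : realType.

Lemma is_derive_trig (p q s : R) :
  is_derive s (1:R) (fun t => cos t * p + sin t * q) (- sin s * p + cos s * q).
Proof.
have h1 := is_deriveZl_cst p (is_derive_cos s).
have h2 := is_deriveZl_cst q (is_derive_sin s).
exact: is_deriveD h1 h2.
Qed.

Lemma mvt_abs (F dF : R -> R) (a b : R) :
  (forall x, is_derive x (1:R) F (dF x)) ->
  exists xi, `|F b - F a| = `|dF xi| * `|b - a|.
Proof.
move=> hd.
have cont : forall a b : R, {within `[a, b], continuous F}.
  move=> a' b'; apply: continuous_in_subspaceT => x _.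
  have [dv _] := hd x.
  by apply: differentiable_continuous; apply/derivable1_diffP.
have [ab|ba] := leP a b.
  have [xi _ E] := MVT_segment ab (fun x _ => hd x) (cont a b).
  by exists xi; rewrite E normrM.
have [xi _ E] := MVT_segment (ltW ba) (fun x _ => hd x) (cont b a).
by exists xi; rewrite distrC E normrM [`|b - a|]distrC.
Qed.

Lemma sq_comb (d : nat) (y u : 'rV[R]_d) (a b : R) :
  \sum_i y ord0 i ^+ 2 = 1 -> \sum_i u ord0 i ^+ 2 = 1 ->
  \sum_i y ord0 i * u ord0 i = 0 ->
  \sum_i (a *: y + b *: u) ord0 i ^+ 2 = a ^+ 2 + b ^+ 2.
Proof.
move=> hy hu hyu.
have E : \sum_i (a *: y + b *: u) ord0 i ^+ 2 =
   a ^+ 2 * \sum_i y ord0 i ^+ 2 + b ^+ 2 * \sum_i u ord0 i ^+ 2 +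
   (2 * a * b) * \sum_i y ord0 i * u ord0 i.
  rewrite !mulr_sumr -!big_split /=; apply: eq_bigr => i _; rewrite !mxE; ring.
by rewrite E hy hu hyu; ring.
Qed.

End S5.

Unset Implicit Arguments.

Set Implicit Arguments. Unset Strict Implicit.
Section Core.
Variable R : realType.
Variables (d : nat) (L : 'rV[R]_d -> R).
Hypothesis hC2 : C2_away0 L.
Hypothesis hsi : scale_invariant L.

Lemma norm2_neq0 (z : 'rV[R]_d) : norm2 z = 1 -> z != 0.
Proof.
move=> h; apply/eqP => z0; move: h; rewrite z0 norm2_row.
under eq_bigr do rewrite mxE expr0n /=.
by rewrite big1 // sqrtr0 => /eqP; rewrite eq_sym oner_eq0.
Qed.

Lemma norm2_sum1 (z : 'rV[R]_d) : norm2 z = 1 -> \sum_i z ord0 i ^+ 2 = 1.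
Proof.
rewrite norm2_row => /sqrt_eq1; apply; apply: sumr_ge0 => i _; exact: sqr_ge0.
Qed.

Lemma core (y : 'rV[R]_d) : norm2 y = 1 ->
  ((norm2 (gradient L y))%:E <= pi%:E *
     ereal_sup [set (specnorm (hessian L z))%:E | z in [set z : 'rV[R]_d | norm2 z = 1%R]])%E.
Proof.
set M := ereal_sup _.
move=> hy.
have Mge z : norm2 z = 1 -> ((specnorm (hessian L z))%:E <= M)%E.
  by move=> hz; apply: ereal_sup_ubound; exists z.
have yT : norm2 y^T = 1.
  by rewrite norm2_col -hy norm2_row; under eq_bigr do rewrite mxE.
have sn0 z : 0 <= specnorm (hessian L z).
  exact: le_trans (norm2_ge0 _) (mul_le_specnorm (hessian L z) yT).
have M0 : (0 <= M)%E by apply: le_trans (Mge y hy); rewrite lee_fin.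
set gn := norm2 (gradient L y).
have [gn0|gnpos] := eqVneq gn 0.
  by rewrite gn0; apply: mule_ge0 => //; rewrite lee_fin; exact: pi_ge0.
have gn_gt0 : 0 < gn by rewrite lt0r gnpos norm2_ge0.
set P := fun i => partial L i.
have y0 := norm2_neq0 hy.
have hyy := norm2_sum1 hy.
have hgn : \sum_i P i y ^+ 2 = gn ^+ 2.
  rewrite /gn norm2_col sqr_sqrtr; last by apply: sumr_ge0 => i _; exact: sqr_ge0.
  by apply: eq_bigr => i _; rewrite mxE.
pose u : 'rV[R]_d := gn^-1 *: (gradient L y)^T.
have uE i : u ord0 i = gn^-1 * P i y by rewrite !mxE.
have huu : \sum_i u ord0 i ^+ 2 = 1.
  under eq_bigr do rewrite uE exprMn.
  by rewrite -mulr_sumr hgn exprVn mulVf // expf_neq0.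
have hyu : \sum_i y ord0 i * u ord0 i = 0.
  under eq_bigr do rewrite uE mulrCA.
  by rewrite -mulr_sumr euler // mulr0.
pose g := fun s : R => cos s *: y + sin s *: u.
pose g' := fun s : R => - sin s *: y + cos s *: u.
have ng s : norm2 (g s) = 1.
  by rewrite norm2_row sq_comb // cos2Dsin2 sqrtr1.
have ng' s : norm2 (g' s) = 1.
  by rewrite norm2_row sq_comb // sqrrN addrC cos2Dsin2 sqrtr1.
have g0 s : g s != 0 := norm2_neq0 (ng s).
pose F1 := fun s => \sum_i g' s ord0 i * P i (g s).
have hf s : is_derive s (1:R) (L \o g) (F1 s).
  have [dL dLE] := diffL hC2 (g0 s).
  exact: curve_chain (curve_deriv y u s) dL dLE.
pose Q := fun i j => partial (partial L i) j.
pose F2 := fun s => \sum_i g' s ord0 i * \sum_j g' s ord0 j * Q i j (g s).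
have hF1 s : is_derive s (1:R) F1 (F2 s).
  have term i : is_derive s (1:R) (fun t => g' t ord0 i * P i (g t))
      ((- g s ord0 i) * P i (g s) + g' s ord0 i * \sum_j g' s ord0 j * Q i j (g s)).
    have hA : is_derive s (1:R) (fun t => g' t ord0 i) (- g s ord0 i).
      have -> : (fun t => g' t ord0 i) = (fun t => cos t * u ord0 i + sin t * (- y ord0 i)).
        by apply/funext => t; rewrite !mxE; ring.
      apply: is_derive_eq (is_derive_trig _ _ _) _.
      by rewrite !mxE; ring.
    have hB : is_derive s (1:R) (P i \o g) (\sum_j g' s ord0 j * Q i j (g s)).
      have [dP dPE] := diffPart hC2 i (g0 s).
      exact: curve_chain (curve_deriv y u s) dP dPE.
    have := is_deriveM hA hB.
    have -> : ((fun t => g' t ord0 i) * (P i \o g)) = (fun t => g' t ord0 i * P i (g t)).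
      by apply/funext.
    move=> h; apply: is_derive_eq h _.
    by rewrite /= addrC mulrC.
  have -> : F1 = \sum_i (fun t => g' t ord0 i * P i (g t)).
    by apply/funext => t; rewrite fct_sumE.
  apply: is_derive_eq (is_derive_sum term) _.
  rewrite big_split /=; under eq_bigr do rewrite mulNr.
  by rewrite sumrN euler // oppr0 add0r.
have hF2 s : `|F2 s| <= specnorm (hessian L (g s)).
  have -> : F2 s = \sum_j (g' s) ord0 j * (hessian L (g s) *m (g' s)^T) j ord0.
    rewrite /F2.
    transitivity (\sum_i \sum_j g' s ord0 i * (g' s ord0 j * Q i j (g s))).
      by apply: eq_bigr => i _; rewrite mulr_sumr.
    rewrite exchange_big /=; apply: eq_bigr => j _; rewrite [(_ *m _) j ord0]mxE mulr_sumr.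
    apply: eq_bigr => i _; rewrite [hessian _ _ _ _]mxE [(g' s)^T _ _]mxE /Q; ring.
  exact: quad_bound.
have [c cin hc] : exists2 c, c \in `]-pi, pi[ & is_derive c (1:R) (L \o g) 0.
  apply: Rolle.
  - by have := pi_gt0 R; lra.
  - by move=> x _; exact: (@ex_derive _ _ _ _ _ _ _ (hf x)).
  - apply: continuous_in_subspaceT => x _.
    have [dv _] := hf x.
    by apply: differentiable_continuous; apply/derivable1_diffP.
  - by rewrite /= /g cosN sinN cospi sinpi oppr0 !scale0r.
have F1c : F1 c = 0.
  by have [_ <-] := hf c; have [_ ->] := hc.
have F10 : F1 0 = gn.
  rewrite /F1.
  have -> : g 0 = y by rewrite /g cos0 sin0 scale1r scale0r addr0.
  have -> : g' 0 = u by rewrite /g' sin0 cos0 oppr0 scale0r add0r scale1r.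
  under eq_bigr do rewrite uE -mulrA -expr2.
  by rewrite -mulr_sumr hgn expr2 mulKf // gt_eqF.
have [xi hxi] := mvt_abs c 0 hF1.
rewrite F10 F1c subr0 sub0r normrN in hxi.
have hc' : `|c| <= pi.
  by move: cin; rewrite in_itv /= => /andP[h1 h2]; rewrite ler_norml; apply/andP; split; lra.
have : gn <= pi * specnorm (hessian L (g xi)).
  rewrite -(ger0_norm (ltW gn_gt0)) hxi mulrC.
  by apply: ler_pM => //; exact: normr_ge0.
rewrite -lee_fin EFinM => h; apply: le_trans h _; apply: lee_wpmul2l.
  by rewrite lee_fin; exact: pi_ge0.
exact: Mge.
Qed.
End Core.

Unset Implicit Arguments.

Lemma norm2Z (R : realType) (m n : nat) (c : R) (A : 'M[R]_(m, n)) :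
  norm2 (c *: A) = `|c| * norm2 A.
Proof.
rewrite /norm2.
have -> : \sum_i \sum_j (c *: A) i j ^+ 2 = c ^+ 2 * \sum_i \sum_j A i j ^+ 2.
  rewrite mulr_sumr; apply: eq_bigr => i _; rewrite mulr_sumr.
  by apply: eq_bigr => j _; rewrite mxE exprMn.
rewrite sqrtrM ?sqr_ge0 // sqrtr_sqr //.
Qed.

Lemma norm2_eq0 (R : realType) (d : nat) (x : 'rV[R]_d) : x != 0 -> norm2 x != 0.
Proof.
move=> x0; apply: contra x0 => /eqP; rewrite norm2_row => /eqP.
rewrite sqrtr_eq0 => hs.
have hs0 : \sum_i x ord0 i ^+ 2 = 0.
  by apply/eqP; rewrite eq_le hs sumr_ge0 // => i _; exact: sqr_ge0.
apply/eqP/rowP => i; rewrite mxE.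
have /psumr_eq0P h := hs0.
by apply/eqP; rewrite -sqrf_eq0; apply/eqP; apply: h => // j _; exact: sqr_ge0.
Qed.

Theorem mainTheorem6 (R : realType) (d : nat) (L : 'rV[R]_d -> R) :
  C2_away0 L -> scale_invariant L ->
  forall x : 'rV[R]_d, x != 0 ->
    ((norm2 (gradient L x))%:E <=
     (pi / norm2 x)%:E *
       ereal_sup [set (specnorm (hessian L y))%:E
                 | y in [set y : 'rV[R]_d | norm2 y = 1%R]])%E.
Proof.
move=> hC2 hsi x x0.
set M := ereal_sup _.
set n := norm2 x.
have n0 : 0 < n by rewrite lt0r norm2_eq0 // norm2_ge0.
pose y := n^-1 *: x.
have hy : norm2 y = 1 by rewrite norm2Z ger0_norm ?invr_ge0 ?ltW // mulVf // gt_eqF.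
have xE : x = n *: y by rewrite /y scalerA mulfV ?gt_eqF // scale1r.
have y0 : y != 0 by apply: norm2_neq0.
have gE : gradient L x = n^-1 *: gradient L y.
  apply/matrixP => i j; rewrite !mxE {1}xE partial_scale //.
have := core hC2 hsi hy; rewrite -/M => h.
have ni0 : 0 <= n^-1 by rewrite invr_ge0 ltW.
rewrite gE norm2Z (ger0_norm ni0) EFinM mulrC EFinM -muleA.
by apply: lee_wpmul2l => //; rewrite lee_fin.
Qed.
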